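(* Let $d\ge2$ and let $\eta$ be a distribution on the nonnegative integers with finite mean, and consider the frog model on $\mathbb{T}_d$ with sleeping-frog distribution $\eta$. For $n\ge0$ let $F_n$ be the set of frogs awake at time $n$, and for a frog $f$ let $|f|$ be its distance from the root at time $n$. Set $\theta=\tfrac12\log\big((\mathbf{E}\eta+1)d\big)$, $m=\frac{2\sqrt{(\mathbf{E}\eta+1)d}}{d+1}$ and \[ W_n=\sum_{f\in F_n}e^{-\theta|f|}. \] Then for every $n\ge0$, $\mathbf{E}[W_{n+1}\mid\mathcal{F}_n]\le mW_n$, where $\mathcal{F}_n$ is the $\sigma$-field generated by the process up to time $n$. Consequently $W_n/m^n$ is a nonnegative supermartingale.
   Context: Let $d\ge 2$ and let $\mathbb{T}_d$ be the infinite rooted $d$-ary tree: every vertex has exactly $d$ children, so the root $\varnothing$ has degree $d$ and every other vertex has degree $d+1$. The frog model on $\mathbb{T}_d$ with sleeping-frog distribution $\eta$ (a law on the nonnegative integers) is defined as follows. Initially there is one awake frog at the root, and at each non-root vertex there is an independent $\eta$-distributed number of sleeping frogs. Time is discrete; at each step every awake frog takes one step of its own independent simple random walk (moves to a uniformly random neighbor). When a vertex holding sleeping frogs is visited for the first time by an awake frog, all frogs sleeping there wake up and from then on perform their own independent simple random walks (frogs woken at time $n+1$ belong to $F_{n+1}$). *)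

(* Defs.v *)
From HB Require Import structures.
From mathcomp Require Import all_boot all_order all_algebra.
From mathcomp Require Import all_classical all_reals all_analysis.
Set Implicit Arguments. Unset Strict Implicit. Unset Printing Implicit Defensive.
Import Order.TTheory GRing.Theory Num.Theory.
Local Open Scope ring_scope.

(* Vertices of the rooted d-ary tree T_d: a vertex is the list of child
   indices (each < d) read from the vertex back to the root; the root is [::],
   the i-th child of v is i :: v, the parent of i :: v is v.
   The distance to the root is the size of the list. *)
Definition vertex := seq nat.

Definition nbrs (d : nat) (v : vertex) : seq vertex :=
  match v with
  | [::] => [seq [:: i] | i <- iota 0 d]
  | _ :: w => w :: [seq i :: v | i <- iota 0 d]
  end.

(* A state of the frog model: the positions of the awake frogs (one list entry
   per awake frog) and the set of already visited vertices.  The sleeping frogs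
   at unvisited vertices are i.i.d. eta and independent of everything observed
   so far, so this is the full (Markov) state of the process. *)
Definition state := (seq vertex * seq vertex)%type.

Definition init_state : state := ([:: [::]], [:: [::]]).

Section Kernel.
Variable R : realType.
Local Open Scope ereal_scope.

(* every awake frog takes an independent uniform step to a neighbour *)
Fixpoint moveE (d : nat) (ps : seq vertex) (g : seq vertex -> \bar R) : \bar R :=
  match ps with
  | [::] => g [::]
  | p :: ps' =>
      ((size (nbrs d p))%:R^-1)%:E *
      \big[+%E/0%E]_(q <- nbrs d p) moveE d ps' (fun qs => g (q :: qs))
  end.

(* each newly visited vertex v releases an independent eta-distributed number
   of frogs, which are awake at v *)
Fixpoint wakeE (eta : nat -> R) (vs : seq vertex) (acc : seq vertex)
    (g : seq vertex -> \bar R) : \bar R :=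
  match vs with
  | [::] => g acc
  | v :: vs' => \sum_(k <oo) ((eta k)%:E * wakeE eta vs' (acc ++ nseq k v) g)
  end.

(* One-step transition kernel, as an expectation operator on nonnegative
   functions of the next state. *)
Definition stepE (d : nat) (eta : nat -> R) (g : state -> \bar R) (s : state)
    : \bar R :=
  moveE d s.1 (fun qs =>
    let newv := undup [seq q <- qs | q \notin s.2] in
    wakeE eta newv [::] (fun woken => g (qs ++ woken, s.2 ++ newv))).

Fixpoint lawE (n : nat) (d : nat) (eta : nat -> R) (g : state -> \bar R)
    : \bar R :=
  match n with
  | 0 => g init_state
  | n'.+1 => lawE n' d eta (stepE d eta g)
  end.

(* states having positive probability at time n *)
Fixpoint reachable (n : nat) (d : nat) (eta : nat -> R) (s : state) : Prop :=
  match n with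
  | 0 => s = init_state
  | n'.+1 => exists s0, reachable n' d eta s0 /\
        0 < stepE d eta (fun s' => if s' == s then 1 else 0) s0
  end.

Definition is_pmf (eta : nat -> R) : Prop :=
  (forall k, (0 <= eta k)%R) /\ \sum_(k <oo) (eta k)%:E = 1.

Definition mean (eta : nat -> R) : \bar R := \sum_(k <oo) ((k%:R * eta k)%R)%:E.

End Kernel.

Definition Wfun (R : realType) (theta : R) (s : state) : R :=
  \sum_(f <- s.1) expR (- theta * (size f)%:R).

(* Main.v *)
Require Import Defs.
From HB Require Import structures.
From mathcomp Require Import all_boot all_order all_algebra.
From mathcomp Require Import all_classical all_reals all_analysis.
From mathcomp Require Import ring lra.
Import Order.TTheory GRing.Theory Num.Theory.
Local Open Scope ring_scope.

Section S.
Local Open Scope ereal_scope.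

Lemma moveE_mono (R : realType) d ps (g g' : seq vertex -> \bar R) :
  (forall qs, (forall q, q \in qs -> exists2 p, p \in ps & q \in nbrs d p) ->
     g qs <= g' qs) -> moveE d ps g <= moveE d ps g'.
Proof.
elim: ps g g' => [|p ps IH] g g' H /=; first by apply: H.
apply: lee_wpmul2l; first by rewrite lee_fin invr_ge0.
rewrite big_seq_cond [X in _ <= X]big_seq_cond; apply: lee_sum => q /andP[qn _].
apply: IH => qs Hqs; apply: H => x; rewrite inE => /orP[/eqP->|/Hqs [p' p'in xin]].
  by exists p => //; rewrite inE eqxx.
by exists p' => //; rewrite inE p'in orbT.
Qed.

Lemma moveE_ge0 (R : realType) d ps (g : seq vertex -> \bar R) :
  (forall qs, 0 <= g qs) -> 0 <= moveE d ps g.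
Proof.
elim: ps g => [|p ps IH] g H /=; first by apply: H.
apply: mule_ge0; first by rewrite lee_fin invr_ge0.
by apply: sume_ge0 => q _; apply: IH.
Qed.

Lemma moveE_scale (R : realType) d ps (g : seq vertex -> \bar R) (c : R) :
  (0 <= c)%R -> (forall qs, 0 <= g qs) ->
  moveE d ps (fun qs => c%:E * g qs) = c%:E * moveE d ps g.
Proof.
elim: ps g => [|p ps IH] g H0 H /=; first by [].
under eq_bigr do rewrite IH //.
rewrite -ge0_sume_distrr; last by move=> q _; apply: moveE_ge0.
by rewrite muleCA.
Qed.

Lemma wakeE_ge0 (R : realType) (eta : nat -> R) vs acc (g : seq vertex -> \bar R) :
  (forall k, 0 <= eta k)%R -> (forall qs, 0 <= g qs) -> 0 <= wakeE eta vs acc g.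
Proof.
move=> He; elim: vs acc => [|v vs IH] acc H /=; first by apply: H.
apply: nneseries_ge0 => n _ _; apply: mule_ge0; first by rewrite lee_fin.
by apply: IH.
Qed.

Lemma wakeE_mono (R : realType) (eta : nat -> R) vs acc (g g' : seq vertex -> \bar R) :
  (forall k, 0 <= eta k)%R -> (forall qs, 0 <= g qs) ->
  (forall ws, (forall x, x \in ws -> x \in vs) -> g (acc ++ ws) <= g' (acc ++ ws)) ->
  wakeE eta vs acc g <= wakeE eta vs acc g'.
Proof.
move=> He; elim: vs acc => [|v vs IH] acc H0 H /=.
  by have := H [::] (fun x (xi : x \in [::]) => xi); rewrite cats0.
apply: lee_nneseries.
  by move=> i _ _; apply: mule_ge0; [rewrite lee_fin|apply: wakeE_ge0].
move=> n _; apply: lee_wpmul2l; first by rewrite lee_fin.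
apply: IH => // ws Hws; rewrite -catA; apply: H => x.
rewrite mem_cat inE => /orP[/nseqP[-> _]|/Hws ->]; first by rewrite eqxx.
by rewrite orbT.
Qed.

Lemma wakeE_scale (R : realType) (eta : nat -> R) vs acc (g : seq vertex -> \bar R) (c : R) :
  (forall k, 0 <= eta k)%R -> (0 <= c)%R -> (forall qs, 0 <= g qs) ->
  wakeE eta vs acc (fun qs => c%:E * g qs) = c%:E * wakeE eta vs acc g.
Proof.
move=> He Hc; elim: vs acc => [|v vs IH] acc H /=; first by [].
under eq_eseriesr do rewrite IH // muleCA.
rewrite nneseriesZl // => i _; apply: mule_ge0; first by rewrite lee_fin.
exact: wakeE_ge0.
Qed.


Definition Inv (s : state) : Prop :=
  (forall f, f \in s.1 -> f \in s.2) /\ (forall x v, (x :: v) \in s.2 -> v \in s.2).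

Lemma stepE_ge0 (R : realType) d (eta : nat -> R) (g : state -> \bar R) s :
  (forall k, 0 <= eta k)%R -> (forall s', 0 <= g s') -> 0 <= stepE d eta g s.
Proof.
move=> He H; apply: moveE_ge0 => qs; exact: wakeE_ge0.
Qed.

Lemma stepE_scale (R : realType) d (eta : nat -> R) (g : state -> \bar R) (c : R) s :
  (forall k, 0 <= eta k)%R -> (0 <= c)%R -> (forall s', 0 <= g s') ->
  stepE d eta (fun s' => c%:E * g s') s = c%:E * stepE d eta g s.
Proof.
move=> He Hc H; rewrite /stepE -moveE_scale //; last by move=> qs; exact: wakeE_ge0.
congr moveE; apply/funext => qs /=; exact: wakeE_scale.
Qed.

Lemma stepE_mono (R : realType) d (eta : nat -> R) (g g' : state -> \bar R) s :
  (forall k, 0 <= eta k)%R -> (forall s', 0 <= g s') -> Inv s ->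
  (forall s', Inv s' -> g s' <= g' s') -> stepE d eta g s <= stepE d eta g' s.
Proof.
move=> He H0 [Hf Hc] H; apply: moveE_mono => qs Hqs.
apply: wakeE_mono => [//|qs'|ws Hws]; first exact: H0.
rewrite cat0s; apply: H; split => /=.
  move=> f; rewrite !mem_cat => /orP[fq|/Hws ->]; last by rewrite orbT.
  case fs: (f \in s.2) => //=; by rewrite mem_undup mem_filter fs fq.
move=> x v; rewrite !mem_cat => /orP[/Hc -> //|].
rewrite mem_undup mem_filter => /andP[_ /Hqs [p /Hf pin]].
case: p pin => [|y w] pin /=.
  by move=> /mapP [i _ [_ ->]]; rewrite pin.
rewrite inE => /orP[/eqP eq|/mapP [i _ [_ eq]]].
  by subst w; rewrite (Hc _ _ (Hc _ _ pin)).
by rewrite eq pin.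
Qed.

Lemma Inv_init : Inv init_state.
Proof. by split => /= [f|x v]; rewrite inE // => /eqP. Qed.

Lemma reachable_Inv (R : realType) d (eta : nat -> R) n s :
  (forall k, 0 <= eta k)%R -> reachable n d eta s -> Inv s.
Proof.
move=> He; elim: n s => [|n IH] s /=; first by move->; exact: Inv_init.
move=> [s0 [/IH Hs0 Hpos]].
apply: contrapT => Hn.
have : stepE d eta (fun s' => if s' == s then 1 else 0) s0 <=
       stepE d eta (fun s' => 0%:E * 0) s0.
  apply: stepE_mono => //; first by move=> s'; case: ifP.
  move=> s' Hs'; case: eqP => [E|]; last by rewrite mul0e.
  by subst s'.
rewrite stepE_scale //.
by rewrite mul0e leNgt Hpos.

Qed.


Lemma sum_const_seq (R : realType) (T : Type) (s : seq T) (k : R) :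
  (\sum_(q <- s) k = k *+ size s)%R.
Proof. by elim: s => [|x s IH]; rewrite ?big_nil // big_cons IH mulrS. Qed.

Lemma sum_undup_le (R : realType) (s : seq vertex) (F : vertex -> R) :
  (forall x, 0 <= F x)%R -> (\sum_(x <- undup s) F x <= \sum_(x <- s) F x)%R.
Proof.
move=> H; elim: s => [|x s IH] /=; first by rewrite !big_nil.
case: ifP => _; last by rewrite !big_cons lerD2l.
by rewrite big_cons (le_trans IH) // lerDr.
Qed.

Definition avg {R : realType} d (h : vertex -> R) (p : vertex) : R :=
  ((size (nbrs d p))%:R^-1 * \sum_(q <- nbrs d p) h q)%R.

Lemma size_nbrs d p : size (nbrs d p) = if p is [::] then d else d.+1.
Proof. by case: p => [|x v] /=; rewrite size_map size_iota. Qed.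

Lemma moveE_add (R : realType) d ps (h : vertex -> R) :
  (0 < d)%N -> forall (c : R) (g : seq vertex -> \bar R),
  (forall qs, g qs = (c + \sum_(q <- qs) h q)%:E) ->
  moveE d ps g = (c + \sum_(p <- ps) avg d h p)%:E.
Proof.
move=> d0; elim: ps => [|p ps IH] c g H /=; first by rewrite H !big_nil.
under eq_bigr => q _.
  rewrite (IH (c + h q)%R); last by move=> qs; rewrite H big_cons addrA.
over.
set S := (\sum_(p0 <- ps) avg d h p0)%R.
set n := (size (nbrs d p))%:R.
have nz : n != 0%R :> R.
  by rewrite /n pnatr_eq0 size_nbrs; case: p {S n} => [|? ?] //; rewrite -lt0n.
have -> : (\sum_(q <- nbrs d p) (fun q0 => (c + h q0 + S)%:E) q) =
   ((c + S) * n + \sum_(q <- nbrs d p) h q)%R%:E.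
  rewrite sumEFin; congr EFin.
  rewrite (eq_bigr (fun q => (c + S) + h q)%R); last by move=> q _; rewrite addrAC.
  by rewrite big_split /= sum_const_seq mulr_natr.
rewrite -EFinM big_cons -/S {1}/avg -/n; congr EFin.
set T := (\sum_(q <- nbrs d p) h q)%R.
by field.
Qed.


Lemma wakeE_add (R : realType) (eta : nat -> R) (w : vertex -> R) vs :
  is_pmf eta -> (mean eta < +oo) -> (forall x, 0 <= w x)%R ->
  forall (B : R) acc (g : seq vertex -> \bar R), (0 <= B)%R ->
  (forall ws, g ws = (B + \sum_(f <- ws) w f)%:E) ->
  wakeE eta vs acc g =
  (B + \sum_(f <- acc) w f + fine (mean eta) * \sum_(v <- vs) w v)%:E.
Proof.
move=> [He He1] Hm Hw; elim: vs => [|v vs IH] B acc g B0 H /=.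
  by rewrite H big_nil mulr0 addr0.
have m0 : 0 <= mean eta.
  by apply: nneseries_ge0 => n _ _; rewrite lee_fin mulr_ge0.
have mE : mean eta = (fine (mean eta))%:E.
  by rewrite fineK // ge0_fin_numE.
set E := fine (mean eta) in mE *.
set C := (B + \sum_(f <- acc) w f + E * \sum_(v0 <- vs) w v0)%R.
have C0 : (0 <= C)%R.
  apply: addr_ge0; first by apply: addr_ge0 => //; apply: sumr_ge0.
  apply: mulr_ge0; last by apply: sumr_ge0.
  by rewrite -lee_fin -mE.
have nseqsum k : (\sum_(f <- nseq k v) w f = k%:R * w v)%R.
  elim: k => [|k IHk]; first by rewrite big_nil mul0r.
  by rewrite /= big_cons IHk mulrSr mulrDl mul1r addrC.
under eq_eseriesr => k _.
  rewrite (IH B) // big_cat nseqsum.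
  have -> : (B + (\sum_(f <- acc) w f + k%:R * w v) + E * \sum_(v0 <- vs) w v0
     = C + k%:R * w v)%R by rewrite /C; ring.
  rewrite -EFinM mulrDr EFinD.
over.
rewrite /= nneseriesD; last first.
- by move=> i _ _; rewrite lee_fin mulrA mulr_ge0 // mulr_ge0.
- by move=> i _ _; rewrite lee_fin mulr_ge0.
under eq_eseriesr do rewrite EFinM muleC.
rewrite nneseriesZl; last by move=> i _; rewrite lee_fin.
under [X in _ + X = _]eq_eseriesr => k _.
  rewrite (_ : (eta k * (k%:R * w v))%R = (w v * (k%:R * eta k))%R); last by ring.
  rewrite EFinM.
over.
rewrite nneseriesZl; last by move=> i _; rewrite lee_fin mulr_ge0.
rewrite He1 mule1.
have -> : \sum_(i <oo) ((i%:R * eta i)%R)%:E = mean eta by [].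
rewrite mE -EFinM -EFinD; congr EFin; rewrite /C big_cons; ring.
Qed.


Lemma frog_bound (R : realType) d (E r : R) (h : vertex -> R) p :
  (2 <= d)%N -> (0 <= E)%R -> (0 < r)%R -> (r ^+ 2 = (E + 1) * d%:R)%R ->
  (forall q, h q <= (1 + E) * r^-1 ^+ size q)%R ->
  (forall x v, p = x :: v -> h v = r^-1 ^+ size v)%R ->
  (avg d h p <= 2 * r / (d%:R + 1) * r^-1 ^+ size p)%R.
Proof.
move=> d2 E0 r0 rE Hh Hv.
have d0 : (0 < d)%N by apply: leq_trans d2.
have dpos : (0 < d%:R :> R)%R by rewrite ltr0n.
have dnz : (d%:R != 0 :> R)%R by rewrite gt_eqF.
have d1nz : (d%:R + 1 != 0 :> R)%R by rewrite gt_eqF // addr_gt0.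
have rnz : (r != 0)%R by rewrite gt_eqF.
have Ee : (E = r ^+ 2 / d%:R - 1)%R by rewrite rE; field.
rewrite /avg size_nbrs; case: p Hv => [|x v] Hv /=.
  rewrite expr0 mulr1 big_map.
  apply: (@le_trans _ _ ((d%:R)^-1 * \sum_(i <- iota 0 d) ((1 + E) * r^-1))%R).
    by rewrite ler_wpM2l ?invr_ge0 ?ler0n //; apply: ler_sum => i _; rewrite (le_trans (Hh _)) // expr1.
  rewrite sum_const_seq size_iota -(mulr_natr ((1 + E) * r^-1)) Ee.
  rewrite -subr_le0.
  have -> : ((d%:R)^-1 * ((1 + (r ^+ 2 / d%:R - 1)) * r^-1 * d%:R) - 2 * r / (d%:R + 1)
     = r * (1 - d%:R) / (d%:R * (d%:R + 1)))%R.
    by field; rewrite d1nz dnz rnz.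
  apply: mulr_le0_ge0; last by rewrite invr_ge0 mulr_ge0 // ?addr_ge0 // ltW.
  by apply: mulr_ge0_le0; [exact: ltW | rewrite subr_le0 ler1n].
rewrite big_cons big_map (Hv x v erefl).
apply: (@le_trans _ _ ((d.+1%:R)^-1 * (r^-1 ^+ size v +
   \sum_(i <- iota 0 d) ((1 + E) * r^-1 ^+ (size v).+2)))%R).
  rewrite ler_wpM2l ?invr_ge0 ?ler0n // lerD2l; apply: ler_sum => i _.
  exact: Hh.
rewrite sum_const_seq size_iota -(mulr_natr ((1 + E) * _)) Ee !exprS -natr1.
set b := (r^-1 ^+ size v)%R.
rewrite le_eqVlt; apply/orP; left; apply/eqP.
by field; rewrite ?d1nz ?dnz ?rnz.
Qed.


Lemma W_ge0 (R : realType) (theta : R) s : (0 <= Wfun theta s)%R.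
Proof. by apply: sumr_ge0 => f _; apply: expR_ge0. Qed.

Lemma key (R : realType) d (eta : nat -> R) s (E theta m : R) :
  (2 <= d)%N -> is_pmf eta -> mean eta < +oo -> Inv s ->
  E = fine (mean eta) ->
  theta = (2^-1 * ln ((E + 1) * d%:R))%R ->
  m = (2 * Num.sqrt ((E + 1) * d%:R) / (d%:R + 1))%R ->
  stepE d eta (fun s' => (Wfun theta s')%:E) s <= (m * Wfun theta s)%:E.
Proof.
move=> d2 [He He1] Hm [Hf Hc] Ee th me.
have m0 : 0 <= mean eta.
  by apply: nneseries_ge0 => n _ _; rewrite lee_fin mulr_ge0.
have E0 : (0 <= E)%R by rewrite Ee; apply: fine_ge0.
have d0 : (0 < d)%N by apply: leq_trans d2.
set X := ((E + 1) * d%:R)%R.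
have X0 : (0 < X)%R by rewrite mulr_gt0 // ?ltr0n // ltr_pwDr.
set r := Num.sqrt X.
have r0 : (0 < r)%R by rewrite sqrtr_gt0.
have rE : (r ^+ 2 = (E + 1) * d%:R)%R by rewrite sqr_sqrtr // ltW.
have wE f : (expR (- theta * (size f)%:R) = r^-1 ^+ size f)%R.
  rewrite expRM_natr expRN; suff -> : expR theta = r by [].
  rewrite th -/X /r -powR12_sqrt ?ltW // /powR gt_eqF // mulrC.
set w := fun f : vertex => expR (- theta * (size f)%:R).
have w0 f : (0 <= w f)%R by apply: expR_ge0.
set h := fun q : vertex => (w q + (if q \notin s.2 then E * w q else 0))%R.
apply: (le_trans (@moveE_mono _ d s.1 _ (fun qs => (0 + \sum_(q <- qs) h q)%:E) _)).
  move=> qs _.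
  cbv zeta.
  rewrite (@wakeE_add _ _ w _ (conj He He1) Hm w0 (\sum_(q <- qs) w q)%R) -?Ee; last 2 first.
  - by apply: sumr_ge0.
  - by move=> ws; rewrite /Wfun /= big_cat.
  rewrite lee_fin big_nil add0r addr0 /h big_split /= lerD2l -big_mkcond /= -mulr_sumr.
  rewrite ler_wpM2l // -[X in (_ <= X)%R]big_filter; exact: sum_undup_le.
rewrite (@moveE_add _ _ _ h d0 0%R) //.
rewrite lee_fin add0r /Wfun mulr_sumr big_seq [X in (_ <= X)%R]big_seq.
apply: ler_sum => p pin.
have := @frog_bound _ d E r h p d2 E0 r0 rE.
rewrite -wE me -/X -/r; apply.
  move=> q; rewrite -wE /h -/(w q); case: ifP => _; first by rewrite mulrDl mul1r.
  by rewrite addr0 mulrDl mul1r lerDl mulr_ge0.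
move=> x v pE; rewrite /h; subst p.
by rewrite (Hc _ _ (Hf _ pin)) /= addr0 /w wE.
Qed.

End S.

Theorem mainTheorem4 (R : realType) (d : nat) (eta : nat -> R) :
  (2 <= d)%N -> is_pmf eta -> (mean eta < +oo)%E ->
  let Eeta := fine (mean eta) in
  let theta := 2^-1 * ln ((Eeta + 1) * d%:R) in
  let m := 2 * Num.sqrt ((Eeta + 1) * d%:R) / (d%:R + 1) in
  (forall n s, reachable n d eta s ->
     (stepE d eta (fun s' => (Wfun theta s')%:E) s <= (m * Wfun theta s)%:E)%E)
  /\
  (forall n,
     (lawE n d eta (fun s => (Wfun theta s)%:E) < +oo)%E /\
     (forall s, reachable n d eta s ->
        (stepE d eta (fun s' => (Wfun theta s' / m ^+ n.+1)%:E) s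
           <= (Wfun theta s / m ^+ n)%:E)%E)).
Proof.
move=> d2 Hp Hm E theta m.
have He := Hp.1.
have Hkey s : Inv s ->
    (stepE d eta (fun s' => (Wfun theta s')%:E) s <= (m * Wfun theta s)%:E)%E.
  by move=> Hs; apply: (@key _ d eta s E theta m).
have m0 : (0 <= mean eta)%E.
  by apply: nneseries_ge0 => n _ _; rewrite lee_fin mulr_ge0.
have E0 : 0 <= E by apply: fine_ge0.
have d0 : (0 < d)%N by apply: leq_trans d2.
have mpos : 0 < m.
  rewrite /m divr_gt0 ?addr_gt0 ?ltr0n // mulr_gt0 // sqrtr_gt0 mulr_gt0 ?ltr0n //.
  by rewrite ltr_pwDr.
have law : forall n g c, 0 <= c -> (forall s, (0 <= g s)%E) ->
    (forall s, Inv s -> (g s <= (c * Wfun theta s)%:E)%E) ->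
    (lawE n d eta g <= (c * m ^+ n)%:E)%E.
  elim=> [|n IH] g c c0 g0 Hg /=.
    have := Hg _ Inv_init.
    by rewrite /Wfun big_cons big_nil /= mulr0 expR0 addr0 expr0.
  rewrite exprS mulrA; apply: IH.
  - by rewrite mulr_ge0 // ltW.
  - by move=> s; apply: stepE_ge0.
  move=> s Hs.
  apply: (@le_trans _ _ (stepE d eta (fun s' => c%:E * (Wfun theta s')%:E)%E s)).
    apply: stepE_mono => // s' Hs'; by rewrite -EFinM; apply: Hg.
  rewrite stepE_scale //; last by move=> s'; rewrite lee_fin W_ge0.
  rewrite -mulrA EFinM; apply: lee_wpmul2l; first by rewrite lee_fin.
  exact: Hkey.
split.
  by move=> n s /(@reachable_Inv _ _ _ _ _ He) Hs; apply: Hkey.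
move=> n; split.
  apply: (@le_lt_trans _ _ (1 * m ^+ n)%:E); last exact: ltry.
  apply: law => // [s|s Hs]; first by rewrite lee_fin W_ge0.
  by rewrite mul1r.
move=> s /(@reachable_Inv _ _ _ _ _ He) Hs.
have -> : (fun s' => (Wfun theta s' / m ^+ n.+1)%:E) =
          (fun s' => ((m ^+ n.+1)^-1)%:E * (Wfun theta s')%:E)%E.
  by apply/funext => s'; rewrite -EFinM mulrC.
rewrite stepE_scale //; last 2 first.
- by rewrite invr_ge0 exprn_ge0 // ltW.
- by move=> s'; rewrite lee_fin W_ge0.
apply: (@le_trans _ _ (((m ^+ n.+1)^-1)%:E * (m * Wfun theta s)%:E)%E).
  by apply: lee_wpmul2l; [rewrite lee_fin invr_ge0 exprn_ge0 // ltW|exact: Hkey].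
rewrite -EFinM lee_fin exprS invfM.
have mnz : m != 0 by rewrite gt_eqF.
have mnz' : m ^+ n != 0 by rewrite expf_neq0.
rewrite le_eqVlt; apply/orP; left; apply/eqP.
by field; rewrite mnz mnz'.
Qed.
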